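(* Let $G$ be a graph with girth at least $5$ (in particular, any forest). Then $\gamma^{SLD}(G)=\gamma_2(G)$.
   Context: All graphs are finite, simple and undirected (not necessarily connected). For $u\in V$, $N(u)$ is the set of neighbours of $u$ and $N[u]=N(u)\cup\{u\}$. A code is a non-empty subset $C\subseteq V$; $I(C;u)=N[u]\cap C$. A code $C$ is self-locating-dominating if for every $u\in V\setminus C$ we have $I(C;u)\neq\emptyset$ and $\bigcap_{c\in I(C;u)}N[c]=\{u\}$; $\gamma^{SLD}(G)$ is the minimum size of such a code. A set $S\subseteq V$ is $2$-dominating if $|N[u]\cap S|\ge 2$ for every $u\in V\setminus S$; $\gamma_2(G)$ is the minimum size of a $2$-dominating set. The girth is the length of a shortest cycle; acyclic graphs have infinite girth. *)

(* Defs.v *)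
From mathcomp Require Import all_boot.
Set Implicit Arguments. Unset Strict Implicit. Unset Printing Implicit Defensive.

Section Graphs.
Variables (T : finType) (e : rel T).

Definition simple_graph : Prop := symmetric e /\ irreflexive e.

Definition cnbhd (u : T) : {set T} := [set v | (v == u) || e u v].

Definition Iset (C : {set T}) (u : T) : {set T} := cnbhd u :&: C.

Definition is_SLD (C : {set T}) : bool :=
  (C != set0) &&
  [forall u, (u \notin C) ==>
     ((Iset C u != set0) &&
      (\bigcap_(c in Iset C u) cnbhd c == [set u]))].

Definition is_2dom (S : {set T}) : bool :=
  [forall u, (u \notin S) ==> (1 < #|cnbhd u :&: S|)].

(* minimum sizes (the whole vertex set is always feasible when T is nonempty,
   so #|T| is a valid default for the min) *)
Definition gammaSLD : nat := \big[minn/#|T|]_(C : {set T} | is_SLD C) #|C|.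
Definition gamma2 : nat := \big[minn/#|T|]_(S : {set T} | is_2dom S) #|S|.

Definition girth_ge5 : Prop :=
  forall s : seq T, ucycle e s -> size s != 3 /\ size s != 4.

End Graphs.

(* Main.v *)
Require Import Defs.
From mathcomp Require Import all_boot.

Lemma sld_iff_2dom (T : finType) (e : rel T) :
  simple_graph e -> 0 < #|T| -> girth_ge5 e ->
  forall C : {set T}, is_SLD e C = is_2dom e C.
Proof.
move=> [esym eirr] T0 girth C.
have inN : forall a b, (b \in cnbhd e a) = (b == a) || e a b.
  by move=> a b; rewrite /cnbhd inE.
apply/idP/idP.
- case/andP=> _ /forallP H; apply/forallP=> u; apply/implyP=> uC.
  move: (H u); rewrite uC /= => /andP [In0 /eqP Hb].
  rewrite ltnNge; apply/negP=> Hle.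
  have I1 : #|Iset e C u| = 1.
    by apply/eqP; rewrite eqn_leq Hle lt0n cards_eq0.
  have [c Ic] := cards1P (introT eqP I1).
  move: Hb; rewrite Ic big_set1 => Hc.
  have cI : c \in Iset e C u by rewrite Ic set11.
  have : c \in cnbhd e c by rewrite inN eqxx.
  rewrite Hc inE => /eqP cu.
  move: cI; rewrite /Iset inE cu (negbTE uC) andbF //.
- move/forallP=> H; apply/andP; split.
    apply/set0Pn.
    have [x _] : exists x : T, true.
      by case: (pickP (@predT T)) => [x _|H0]; [exists x | rewrite (eq_card0 H0) in T0].
    case xC: (x \in C); first by exists x.
    move: (H x); rewrite xC /= => /card_gt1P [a [_ [aI _ _]]].
    by exists a; move: aI; rewrite inE => /andP [].
  apply/forallP=> u; apply/implyP=> uC.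
  move: (H u); rewrite uC /= => Hgt.
  have Hgt' := Hgt.
  case/card_gt1P: Hgt => c1 [c2 [c1I c2I c12]].
  apply/andP; split.
    by apply/set0Pn; exists c1.
  have memI : forall c, c \in Iset e C u -> (c \in C) && e u c.
    move=> c; rewrite /Iset inE inN => /andP [/orP [/eqP cu|uc] cC].
      by move: uC; rewrite -cu cC.
    by rewrite cC uc.
  apply/eqP/setP=> v; rewrite in_set1.
  apply/bigcapP/eqP.
  + move=> Hv; apply/eqP; apply/negP=> vu.
    case/andP: (memI _ c1I) => c1C uc1.
    case/andP: (memI _ c2I) => c2C uc2.
    have uneq1 : u != c1 by apply/eqP=> E; move: uC; rewrite E c1C.
    have uneq2 : u != c2 by apply/eqP=> E; move: uC; rewrite E c2C.
    move: (Hv _ c1I) (Hv _ c2I); rewrite !inN.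
    case/orP=> [/eqP vc1|c1v]; case/orP=> [/eqP vc2|c2v].
    * by move: c12; rewrite -vc1 -vc2 eqxx.
    * rewrite vc1 in c2v.
      suff Hc : ucycle e [:: u; c1; c2] by case: (girth _ Hc) => /eqP; rewrite /=.
        by rewrite /ucycle /= uc1 esym c2v esym uc2 /= !inE negb_or uneq1 uneq2 c12.
    * rewrite vc2 in c1v.
      suff Hc : ucycle e [:: u; c1; c2] by case: (girth _ Hc) => /eqP; rewrite /=.
        by rewrite /ucycle /= uc1 c1v esym uc2 /= !inE negb_or uneq1 uneq2 c12.
    * have vu' : (v == u) = false by apply/negP.
      have vc1 : c1 != v by apply/eqP=> E; rewrite E eirr in c1v.
      have vc2 : v != c2 by apply/eqP=> E; rewrite E eirr in c2v.
      suff Hc : ucycle e [:: u; c1; v; c2] by case: (girth _ Hc) => /eqP; rewrite /=.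
        by rewrite /ucycle /= uc1 c1v esym c2v esym uc2 /= !inE !negb_or uneq1 uneq2 c12 (eq_sym u v) vu' vc1 vc2.
  + move=> -> c /memI /andP [_ uc]; by rewrite inN esym uc orbT.
Qed.

Theorem mainTheorem11 (T : finType) (e : rel T) :
  simple_graph e -> 0 < #|T| -> girth_ge5 e ->
  gammaSLD e = gamma2 e.
Proof.
move=> sg T0 g; rewrite /gammaSLD /gamma2.
by apply: eq_bigl => C; rewrite (@sld_iff_2dom T e sg T0 g).
Qed.
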